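(* Let $\mathcal F_0\subset\mathcal F^d_{bm}(\mathbf I)$ be the subspace $\mathcal F_0=\mathrm{span}\{\Omega,\ g_{\xi_n}\otimes\cdots\otimes g_{\xi_1}: n\in\mathbb N,\ \xi_n\succ\xi_{n-1}\succ\cdots\succ\xi_1\text{ in }\mathbf I\}$. Each of $A^+_\xi,A^-_\xi,A^\circ_\xi$ preserves $\mathcal F_0$; let $\mathtt B^\varepsilon_\xi$ denote the restriction of $A^\varepsilon_\xi$ to $\mathcal F_0$ ($\varepsilon\in\{+,-,\circ\}$), so that $\mathtt B^\circ_\xi=\mathtt B^+_\xi\mathtt B^-_\xi$. Let $\mathcal C$ be the algebra of bounded operators on (the closure of) $\mathcal F_0$, $\varphi(X)=\langle X\Omega,\Omega\rangle$ the vacuum state, and $\mathcal C_\xi$ the $*$-algebra generated by $\mathtt B^+_\xi,\mathtt B^-_\xi,\mathtt B^\circ_\xi$. Then $\{\mathcal C_\xi:\xi\in\mathbf I\}$ is bm-independent in $(\mathcal C,\varphi)$ with respect to the poset $(\mathbf I,\preceq)$.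
   Context: Cones and index sets: fix $d\in\mathbb N$ and one of the following three cases. (a) $\Pi_d=\mathbb R_+^d\subset\mathbb R^d$ with coordinatewise order, and $\mathbf I=\mathbb N^d$. (b) The Lorentz cone $\Pi_d=\Lambda^1_d=\{(t;x)\in\mathbb R\times\mathbb R^d: t\ge\|x\|\}$, with $(s;y)\preceq(t;x)$ iff $t-s\ge\|x-y\|$, and $\mathbf I=\mathbb N\times\mathbb Z^d$. (c) $\Pi_d$ the cone of positive semidefinite real symmetric $d\times d$ matrices, with $\rho\preceq\xi$ iff $\xi-\rho$ is positive semidefinite, and $\mathbf I$ the set of positive semidefinite symmetric $d\times d$ matrices with integer entries. Write $\xi\prec\rho$ if $\xi\preceq\rho$ and $\xi\neq\rho$; $\xi\nsim\rho$ if incomparable. Discrete bm-Fock space: for each $\xi\in\mathbf I$ let $\mathcal H_\xi$ be a Hilbert space with orthonormal basis $\{e^m_\xi: m\ge0\}$, where $\Omega:=e^0_\xi$ is a common unit vector for all $\xi$. $\mathcal F^d_{bm}(\mathbf I)$ is the Hilbert space spanned by $\Omega$ and simple tensors $h_{\rho_n}\otimes\cdots\otimes h_{\rho_1}$ with $\rho_n\succ\cdots\succ\rho_1$ in $\mathbf I$, $h_{\rho_i}\in\mathcal H_{\rho_i}$, $h_{\rho_i}\perp\Omega$; tensors of different length or different index sequences are orthogonal, $\Omega$ is orthogonal to all tensors, and $\langle h_{\rho_n}\otimes\cdots\otimes h_{\rho_1},f_{\rho_n}\otimes\cdots\otimes f_{\rho_1}\rangle=\prod_i\langle h_{\rho_i},f_{\rho_i}\rangle$.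 Fix unit vectors $g_\xi\in\mathcal H_\xi$, $g_\xi\perp\Omega$. Creation: $A^+_\xi\Omega=g_\xi$, $A^+_\xi(h_{\rho_n}\otimes\cdots\otimes h_{\rho_1})=g_\xi\otimes h_{\rho_n}\otimes\cdots\otimes h_{\rho_1}$ if $\xi\succ\rho_n$, else $0$. Annihilation: $A^-_\xi\Omega=0$, $A^-_\xi(h_{\rho_n}\otimes\cdots\otimes h_{\rho_1})=\langle g_\xi,h_{\rho_n}\rangle h_{\rho_{n-1}}\otimes\cdots\otimes h_{\rho_1}$ if $\xi=\rho_n$ (giving $\langle g_\xi,h_{\rho_1}\rangle\Omega$ when $n=1$), else $0$. Conservation: $A^\circ_\xi\Omega=0$, $A^\circ_\xi(h_{\rho_n}\otimes\cdots\otimes h_{\rho_1})=\langle g_\xi,h_{\rho_n}\rangle h_{\rho_n}\otimes\cdots\otimes h_{\rho_1}$ if $\xi=\rho_n$, else $0$. bm-independence: for $(\mathcal A,\varphi)$ an algebra with a state and a poset $(\mathbb X,\preceq)$, subalgebras $\{\mathcal A_\xi\}$ are bm-independent if: (BM1) whenever $\xi\prec\rho\succ\eta$, or $\xi\nsim\rho\succ\eta$, or $\xi\prec\rho\nsim\eta$, then $a_1a_2a_3=\varphi(a_2)a_1a_3$ for all $a_1\in\mathcal A_\xi,a_2\in\mathcal A_\rho,a_3\in\mathcal A_\eta$; (BM2) whenever $\xi_1\succ\cdots\succ\xi_m\nsim\cdots\nsim\xi_k\prec\xi_{k+1}\prec\cdots\prec\xi_n$ for some $1\le m\le k\le n$ and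 $a_j\in\mathcal A_{\xi_j}$, then $\varphi(a_1\cdots a_n)=\prod_j\varphi(a_j)$. *)

(* Defs.v *)
From HB Require Import structures.
From mathcomp Require Import all_boot all_order all_algebra.
From mathcomp Require Import boolp classical_sets fsbigop reals.
From mathcomp.real_closed Require Import complex.

Set Implicit Arguments.
Unset Strict Implicit.
Unset Printing Implicit Defensive.

Import Order.TTheory GRing.Theory Num.Theory.
Local Open Scope ring_scope.

Section Generic.
Variables (T : choiceType) (le : T -> T -> Prop).

Definition plt (x y : T) : Prop := le x y /\ x <> y.
Definition incomp (x y : T) : Prop := ~ le x y /\ ~ le y x.

(* A list [:: xi_n; ...; xi_1] with xi_n > xi_(n-1) > ... > xi_1.
   The empty list stands for the vacuum Omega. *)
Fixpoint is_chain (s : seq T) : Prop :=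
  match s with
  | [::] => True
  | x :: s' => (match s' with [::] => True | y :: _ => plt y x end) /\ is_chain s'
  end.

Variable K : numClosedFieldType.

(* Vectors: coefficient functions w.r.t. the orthonormal system
   { Omega } u { g_{xi_n} (x) ... (x) g_{xi_1} : chains }.
   The coefficient at the chain c is v c. *)
Definition vect := seq T -> K.

Definition F0 (v : vect) : Prop :=
  exists s : seq (seq T), forall c, v c != 0 -> c \in s /\ is_chain c.

Definition inner (u v : vect) : K := \sum_(c \in [set: seq T]) u c * (v c)^*.

Definition Omega : vect := fun c => (c == [::])%:R.

Definition vac_state (X : vect -> vect) : K := inner (X Omega) Omega.

(* B^+_xi : e_c |-> e_(xi :: c) if xi > top of c (or c is empty), 0 otherwise *)
Definition Bplus (xi : T) (v : vect) : vect := fun c =>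
  match c with
  | [::] => 0
  | x :: c' => if (x == xi) && `[< is_chain c >] then v c' else 0
  end.

(* B^-_xi : e_(xi :: c) |-> e_c, e_c |-> 0 if the top of c is not xi *)
Definition Bminus (xi : T) (v : vect) : vect := fun c =>
  if `[< is_chain (xi :: c) >] then v (xi :: c) else 0.

Definition Bcons (xi : T) (v : vect) : vect := fun c =>
  match c with
  | [::] => 0
  | x :: _ => if x == xi then v c else 0
  end.

Definition preserves_F0 (X : vect -> vect) : Prop :=
  forall v, F0 v -> F0 (X v).

Definition is_adjoint (X Y : vect -> vect) : Prop :=
  forall u v, F0 u -> F0 v -> inner (X u) v = inner u (Y v).

Inductive star_alg (G : (vect -> vect) -> Prop) : (vect -> vect) -> Prop :=
| sa_gen X : G X -> star_alg G X
| sa_add X Y : star_alg G X -> star_alg G Y ->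
    star_alg G (fun v c => X v c + Y v c)
| sa_scale (a : K) X : star_alg G X -> star_alg G (fun v c => a * X v c)
| sa_mul X Y : star_alg G X -> star_alg G Y -> star_alg G (fun v => X (Y v))
| sa_adj X Y : star_alg G X -> preserves_F0 Y -> is_adjoint X Y ->
    star_alg G Y.

Definition Calg (xi : T) : (vect -> vect) -> Prop :=
  star_alg (fun X => X = Bplus xi \/ X = Bminus xi \/ X = Bcons xi).

Definition bm_independent (A : T -> (vect -> vect) -> Prop) : Prop :=
  (forall xi rho eta : T,
      (plt xi rho /\ plt eta rho) \/ (incomp xi rho /\ plt eta rho)
      \/ (plt xi rho /\ incomp rho eta) ->
      forall a1 a2 a3, A xi a1 -> A rho a2 -> A eta a3 ->
      forall v, F0 v -> a1 (a2 (a3 v)) = (fun c => vac_state a2 * a1 (a3 v) c))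
  /\
  (* BM2: indices and operators are numbered 1..n *)
  (forall (n m k : nat) (xs : nat -> T) (a : nat -> (vect -> vect)),
      (1 <= m <= k)%N -> (k <= n)%N ->
      (forall i, (1 <= i < m)%N -> plt (xs i.+1) (xs i)) ->
      (forall i, (m <= i < k)%N -> incomp (xs i) (xs i.+1)) ->
      (forall i, (k <= i < n)%N -> plt (xs i) (xs i.+1)) ->
      (forall j, (1 <= j <= n)%N -> A (xs j) (a j)) ->
      vac_state (foldr (fun j acc => fun v => a j (acc v)) id (iota 1 n))
      = \prod_(1 <= j < n.+1) vac_state (a j)).

End Generic.

Inductive cone_case := Orthant | Lorentz | PSDcone.

Section Cones.
Variables (R : realType) (d : nat).

Definition IdxA : choiceType := {ffun 'I_d -> nat}.
Definition leA (x y : IdxA) : Prop := forall i, (x i <= y i)%N.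

Definition IdxB : choiceType := (nat * {ffun 'I_d -> int})%type.
Definition leB (p q : IdxB) : Prop :=
  Num.sqrt (\sum_(i < d) ((q.2 i - p.2 i)%:~R : R) ^+ 2)
    <= (q.1%:R : R) - (p.1%:R : R).

Definition psd_real (M : 'M[R]_d) : Prop :=
  M^T = M /\ forall v : 'cV[R]_d, 0 <= (v^T *m M *m v) 0 0.
Definition psd_int (M : 'M[int]_d) : Prop := psd_real (map_mx intr M).
Definition IdxC : choiceType := {M : 'M[int]_d | `[< psd_int M >]}.
Definition leC (x y : IdxC) : Prop := psd_real (map_mx intr (val y - val x)).

Definition Idx (cc : cone_case) : choiceType :=
  match cc with Orthant => IdxA | Lorentz => IdxB | PSDcone => IdxC end.

Definition idx_le (cc : cone_case) : Idx cc -> Idx cc -> Prop :=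
  match cc return Idx cc -> Idx cc -> Prop with
  | Orthant => leA | Lorentz => leB | PSDcone => leC end.
End Cones.

(* Main.v *)
Require Import Defs.
From HB Require Import structures.
From mathcomp Require Import all_boot all_order all_algebra.
From mathcomp Require Import boolp classical_sets fsbigop reals.
From mathcomp.real_closed Require Import complex.
From mathcomp Require Import ring zify lra.
Set Implicit Arguments. Unset Strict Implicit. Unset Printing Implicit Defensive.
Import Order.TTheory GRing.Theory Num.Theory.
Local Open Scope ring_scope.

Definition top_is {T : choiceType} (le : T -> T -> Prop) (xi : T) (c : seq T) : bool :=
  match c with [::] => false | x :: _ => (x == xi) && `[< is_chain le c >] end.
Definition addable {T : choiceType} (le : T -> T -> Prop) (xi : T) (c : seq T) : bool :=
  `[< is_chain le (xi :: c) >].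
Definition Mop {T : choiceType} (le : T -> T -> Prop) {K : numClosedFieldType} (xi : T)
  (a b g e : K) (v : vect T K) : vect T K := fun c =>
  if top_is le xi c then g * v (behead c) + e * v c
  else if addable le xi c then a * v c + b * v (xi :: c) else 0.

Lemma addable_chain {T : choiceType} (le : T -> T -> Prop) xi c :
  addable le xi c -> is_chain le c.
Proof. by move/asboolP => [_]. Qed.

Lemma top_addable {T : choiceType} (le : T -> T -> Prop) xi c :
  top_is le xi c -> c = xi :: behead c /\ addable le xi (behead c).
Proof.
case: c => [|x c] //= /andP [/eqP -> /asboolP H]; split => //.
by apply/asboolP.
Qed.

Lemma addable_top {T : choiceType} (le : T -> T -> Prop) xi c :
  addable le xi c -> top_is le xi (xi :: c).
Proof. by move=> H; rewrite /= eqxx. Qed.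

Lemma addable_ntop {T : choiceType} (le : T -> T -> Prop) xi c :
  addable le xi c -> top_is le xi c = false.
Proof.
move=> H; apply/negbTE/negP => /top_addable [Hc _].
move: H; rewrite Hc => /asboolP [[_ Hne] _]; exact: Hne.
Qed.

Lemma top_chain {T : choiceType} (le : T -> T -> Prop) xi c :
  top_is le xi c -> is_chain le c.
Proof. by case: c => //= x c /andP [_ /asboolP]. Qed.

Lemma Mop_rel {T : choiceType} (le : T -> T -> Prop) {K : numClosedFieldType} xi
  (a b g e : K) (u u' : vect T K) c :
  (forall d, top_is le xi d || addable le xi d -> u d = u' d) ->
  Mop le xi a b g e u c = Mop le xi a b g e u' c.
Proof.
move=> H; rewrite /Mop; case Ht: (top_is le xi c).
  have [Hc Ha] := top_addable Ht.
  by rewrite !H ?Ht ?Ha ?orbT.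
case Ha: (addable le xi c) => //.
by rewrite !H ?Ha ?orbT ?addable_top.
Qed.

Lemma Mop_nonrel {T : choiceType} (le : T -> T -> Prop) {K : numClosedFieldType} xi
  (a b g e : K) (u : vect T K) c :
  ~~ (top_is le xi c || addable le xi c) -> Mop le xi a b g e u c = 0.
Proof. by rewrite /Mop negb_or => /andP [/negbTE -> /negbTE ->]. Qed.

Lemma Mop_lin {T : choiceType} (le : T -> T -> Prop) {K : numClosedFieldType} xi
  (a b g e p q : K) (u u' : vect T K) c :
  Mop le xi a b g e (fun d => p * u d + q * u' d) c =
  p * Mop le xi a b g e u c + q * Mop le xi a b g e u' c.
Proof. rewrite /Mop; case: ifP => _; [|case: ifP => _]; ring. Qed.

Lemma Mop_scale {T : choiceType} (le : T -> T -> Prop) {K : numClosedFieldType} xi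
  (a b g e p : K) (u : vect T K) c :
  Mop le xi a b g e (fun d => p * u d) c = p * Mop le xi a b g e u c.
Proof. rewrite /Mop; case: ifP => _; [|case: ifP => _]; ring. Qed.

Lemma Mop_addc {T : choiceType} (le : T -> T -> Prop) {K : numClosedFieldType} xi
  (a b g e a' b' g' e' : K) (u : vect T K) c :
  Mop le xi (a + a') (b + b') (g + g') (e + e') u c =
  Mop le xi a b g e u c + Mop le xi a' b' g' e' u c.
Proof. rewrite /Mop; case: ifP => _; [|case: ifP => _]; ring. Qed.

Lemma Mop_scalec {T : choiceType} (le : T -> T -> Prop) {K : numClosedFieldType} xi
  (a b g e p : K) (u : vect T K) c :
  Mop le xi (p * a) (p * b) (p * g) (p * e) u c = p * Mop le xi a b g e u c.
Proof. rewrite /Mop; case: ifP => _; [|case: ifP => _]; ring. Qed.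

Lemma Mop_mul {T : choiceType} (le : T -> T -> Prop) {K : numClosedFieldType} xi
  (a1 b1 g1 e1 a2 b2 g2 e2 : K) (v : vect T K) c :
  Mop le xi a1 b1 g1 e1 (Mop le xi a2 b2 g2 e2 v) c =
  Mop le xi (a1*a2+b1*g2) (a1*b2+b1*e2) (g1*a2+e1*g2) (g1*b2+e1*e2) v c.
Proof.
rewrite {1}/Mop; case Ht: (top_is le xi c).
  have [Hc Ha] := top_addable Ht.
  rewrite /Mop Ht (addable_ntop Ha) Ha -Hc; ring.
case Ha: (addable le xi c); last by rewrite /Mop Ht Ha.
rewrite /Mop Ht Ha (addable_top Ha) /=; ring.
Qed.


Lemma F0_chain {T : choiceType} (le : T -> T -> Prop) {K : numClosedFieldType} (v : vect T K) c :
  F0 le v -> ~ is_chain le c -> v c = 0.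
Proof.
move=> [s Hs] Hc; apply/eqP; apply/negP => /negP H.
by have [_ ?] := Hs c H.
Qed.

Lemma F0_ext {T : choiceType} (le : T -> T -> Prop) {K : numClosedFieldType} (u w : vect T K) :
  F0 le u -> (forall c, u c = w c) -> F0 le w.
Proof. by move=> [s Hs] E; exists s => c; rewrite -E; apply: Hs. Qed.

Lemma F0_lin {T : choiceType} (le : T -> T -> Prop) {K : numClosedFieldType} (u w : vect T K) p q :
  F0 le u -> F0 le w -> F0 le (fun c => p * u c + q * w c).
Proof.
move=> [s Hs] [s' Hs']; exists (s ++ s') => c H.
case Hu: (u c == 0); last first.
  by have [H1 H2] := Hs c (negbT Hu); rewrite mem_cat H1.
case Hw: (w c == 0); last first.
  by have [H1 H2] := Hs' c (negbT Hw); rewrite mem_cat H1 orbT.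
by move: H; rewrite (eqP Hu) (eqP Hw) !mulr0 addr0 eqxx.
Qed.

Lemma F0_add {T : choiceType} (le : T -> T -> Prop) {K : numClosedFieldType} (u w : vect T K) :
  F0 le u -> F0 le w -> F0 le (fun c => u c + w c).
Proof.
move=> Hu Hw; apply: F0_ext (F0_lin 1 1 Hu Hw) _ => c; by rewrite !mul1r.
Qed.

Lemma F0_scale {T : choiceType} (le : T -> T -> Prop) {K : numClosedFieldType} (u : vect T K) p :
  F0 le u -> F0 le (fun c => p * u c).
Proof.
move=> Hu; apply: F0_ext (F0_lin p 0 Hu Hu) _ => c; by rewrite mul0r addr0.
Qed.

Lemma Mop_F0 {T : choiceType} (le : T -> T -> Prop) {K : numClosedFieldType} xi (a b g e : K) v :
  F0 le v -> F0 le (Mop le xi a b g e v).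
Proof.
move=> [s Hs]; exists (map (cons xi) s ++ s ++ map behead s) => c.
rewrite /Mop; case Ht: (top_is le xi c).
  move=> H; have [Hc Ha] := top_addable Ht; split; last exact: top_chain Ht.
  case Hv: (v (behead c) == 0).
    move: H; rewrite (eqP Hv) mulr0 add0r.
    case Hv2: (v c == 0); first by rewrite (eqP Hv2) mulr0 eqxx.
    by have [H1 _] := Hs c (negbT Hv2); rewrite !mem_cat H1 orbT.
  have [H1 _] := Hs _ (negbT Hv); rewrite mem_cat (_ : c \in _ = true) //.
  by apply/mapP; exists (behead c).
case Ha: (addable le xi c); last by rewrite eqxx.
move=> H; split; last exact: addable_chain Ha.
case Hv: (v c == 0).
  move: H; rewrite (eqP Hv) mulr0 add0r.
  case Hv2: (v (xi :: c) == 0); first by rewrite (eqP Hv2) mulr0 eqxx.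
  have [H1 _] := Hs _ (negbT Hv2); rewrite !mem_cat (_ : c \in map behead s = true) ?orbT //.
  by apply/mapP; exists (xi :: c).
by have [H1 _] := Hs c (negbT Hv); rewrite !mem_cat H1 orbT.
Qed.

Definition evec {T : choiceType} (K : numClosedFieldType) (c : seq T) : vect T K :=
  fun d => if d == c then 1 else 0.

Lemma evec_F0 {T : choiceType} (le : T -> T -> Prop) {K : numClosedFieldType} c :
  is_chain le c -> F0 le (evec K c).
Proof.
move=> Hc; exists [:: c] => d; rewrite /evec; case: (eqVneq d c) => [->|Hne].
  by rewrite inE eqxx.
by rewrite /= eqxx.
Qed.

Lemma inner_supp {T : choiceType} {K : numClosedFieldType} (u v : vect T K) (S : seq (seq T)) :
  uniq S -> (forall d, d \notin S -> u d * (v d)^* = 0) ->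
  inner u v = \sum_(d <- S) u d * (v d)^*.
Proof.
move=> US H; rewrite /inner (fsbigE S) //.
  by apply: eq_bigl => d; rewrite in_setT.
by move=> i _ Hi; apply: H.
Qed.

Lemma inner_evec {T : choiceType} {K : numClosedFieldType} (c : seq T) (w : vect T K) :
  inner (evec K c) w = (w c)^*.
Proof.
rewrite (inner_supp (S := [:: c])) //.
  by rewrite big_seq1 /evec eqxx mul1r.
by move=> d; rewrite inE /evec => /negbTE ->; rewrite mul0r.
Qed.

Lemma inner_Omega {T : choiceType} {K : numClosedFieldType} (w : vect T K) :
  inner w (Omega K) = w [::].
Proof.
rewrite (inner_supp (S := [:: [::]])) //.
  by rewrite big_seq1 /Omega eqxx conjC1 mulr1.
by move=> d; rewrite inE /Omega => /negbTE ->; rewrite conjC0 mulr0.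
Qed.


Definition Form {T : choiceType} (le : T -> T -> Prop) {K : numClosedFieldType} (xi : T)
  (X : vect T K -> vect T K) : Prop :=
  preserves_F0 le X /\ exists a b g e : K,
    forall v, F0 le v -> forall c, X v c = Mop le xi a b g e v c.

Lemma form_of_eq {T : choiceType} (le : T -> T -> Prop) {K : numClosedFieldType} xi
  (X : vect T K -> vect T K) (a b g e : K) :
  (forall v, F0 le v -> forall c, X v c = Mop le xi a b g e v c) -> Form le xi X.
Proof.
move=> H; split; last by exists a, b, g, e.
move=> v Hv; apply: F0_ext (Mop_F0 xi a b g e Hv) _ => c; by rewrite H.
Qed.

Lemma Mop_relevant_chain {T : choiceType} (le : T -> T -> Prop) xi c :
  top_is le xi c || addable le xi c -> is_chain le c.
Proof. by case/orP => [/top_chain|/addable_chain]. Qed.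

Lemma neq_behead {T : eqType} (x : T) (c : seq T) : c != x :: c.
Proof. apply/negP => /eqP /(congr1 size) /= H; exact: (n_Sn _ H). Qed.

Lemma top_cons {T : choiceType} (le : T -> T -> Prop) xi d :
  top_is le xi (xi :: d) = `[< is_chain le (xi :: d) >].
Proof. by rewrite /top_is eqxx. Qed.

Lemma adj_form {T : choiceType} (le : T -> T -> Prop) {K : numClosedFieldType} xi
  (X Y : vect T K -> vect T K) (a b g e : K) :
  (forall v, F0 le v -> forall c, X v c = Mop le xi a b g e v c) ->
  preserves_F0 le Y -> is_adjoint le X Y ->
  forall v, F0 le v -> forall c, Y v c = Mop le xi a^* g^* b^* e^* v c.
Proof.
move=> HX HY Hadj v Hv c.
case: (asboolP (is_chain le c)) => Hc; last first.
  rewrite (F0_chain (HY _ Hv) Hc) Mop_nonrel //.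
  by apply/negP => /Mop_relevant_chain.
have E : Y v c = (inner (evec K c) (Y v))^* by rewrite inner_evec conjCK.
rewrite E -(Hadj _ _ (evec_F0 Hc) Hv).
have -> : X (evec K c) = Mop le xi a b g e (evec K c).
  by apply: funext => d; apply: HX; exact: evec_F0.
case Ht: (top_is le xi c).
  have [Hc' Ha] := top_addable Ht.
  have Hne : behead c != c by rewrite {2}Hc' neq_behead.
  rewrite (inner_supp (S := [:: behead c; c])); last first.
  - move=> d; rewrite !inE negb_or => /andP [Hd1 Hd2].
    suff -> : Mop le xi a b g e (evec K c) d = 0 by rewrite mul0r.
    rewrite /Mop /evec (negbTE Hd2); case Htd: (top_is le xi d).
      have [Hd' Had] := top_addable Htd.
      case: (eqVneq (behead d) c) => Hbd; last by rewrite /= !(mulr0, addr0, add0r).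
      by move: Had; rewrite Hbd => /addable_ntop; rewrite Ht.
    case: (addable le xi d) => //.
    case: (eqVneq (xi :: d) c) => Hxd; last by rewrite /= !(mulr0, addr0, add0r).
    by move: Hd1; rewrite -Hxd /= eqxx.
  - by rewrite /= inE Hne.
  rewrite !big_cons big_nil addr0 /Mop Ht (addable_ntop Ha) Ha /evec.
  rewrite (negbTE Hne) -Hc' !eqxx /=.
  rewrite !(mulr0, mulr1, add0r, addr0) rmorphD !rmorphM /= !conjCK; ring.
case Ha: (addable le xi c).
  have Htop := addable_top Ha.
  have Hne : c != xi :: c by rewrite neq_behead.
  rewrite (inner_supp (S := [:: c; xi :: c])); last first.
  - move=> d; rewrite !inE negb_or => /andP [Hd1 Hd2].
    suff -> : Mop le xi a b g e (evec K c) d = 0 by rewrite mul0r.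
    rewrite /Mop /evec (negbTE Hd1); case Htd: (top_is le xi d).
      have [Hd' Had] := top_addable Htd.
      case: (eqVneq (behead d) c) => Hbd; last by rewrite /= !(mulr0, addr0, add0r).
      by move: Hd2; rewrite Hd' Hbd eqxx.
    case Had: (addable le xi d) => //.
    case: (eqVneq (xi :: d) c) => Hxd; last by rewrite /= !(mulr0, addr0, add0r).
    by move: Ht; rewrite -Hxd top_cons Hxd (asboolT Hc).
  - by rewrite /= inE Hne.
  rewrite !big_cons big_nil addr0 /Mop Ht Ha Htop /= /evec.
  rewrite eq_sym (negbTE Hne) !eqxx /=.
  rewrite !(mulr0, mulr1, add0r, addr0) rmorphD !rmorphM /= !conjCK; ring.
rewrite (inner_supp (S := [::])) //; last first.
  move=> d _.
  suff -> : Mop le xi a b g e (evec K c) d = 0 by rewrite mul0r.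
  rewrite /Mop /evec; case Htd: (top_is le xi d).
    have [Hd' Had] := top_addable Htd.
    case: (eqVneq d c) => Hdc; first by move: Ht; rewrite -Hdc Htd.
    case: (eqVneq (behead d) c) => Hbd; last by rewrite /= !(mulr0, addr0, add0r).
    by move: Had; rewrite Hbd Ha.
  case Had: (addable le xi d) => //.
  case: (eqVneq d c) => Hdc; first by move: Ha; rewrite -Hdc Had.
  case: (eqVneq (xi :: d) c) => Hxd; last by rewrite /= !(mulr0, addr0, add0r).
  by move: Ht; rewrite -Hxd top_cons Hxd (asboolT Hc).
by rewrite big_nil conjC0 /Mop Ht Ha.
Qed.


Lemma Bplus_eq {T : choiceType} (le : T -> T -> Prop) {K : numClosedFieldType} xi (v : vect T K) c :
  Bplus le xi v c = Mop le xi 0 0 1 0 v c.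
Proof.
rewrite /Mop; case: c => [|x c] /=.
  by case: ifP => _; rewrite ?mul0r ?addr0.
case: ifP => _; first by ring.
by case: ifP => _ //; rewrite !mul0r addr0.
Qed.

Lemma Bminus_eq {T : choiceType} (le : T -> T -> Prop) {K : numClosedFieldType} xi (v : vect T K) c :
  Bminus le xi v c = Mop le xi 0 1 0 0 v c.
Proof.
rewrite /Mop /Bminus; case Ht: (top_is le xi c).
  have [_ Ha] := top_addable Ht.
  case: (asboolP (is_chain le (xi :: c))) => H; last by rewrite !mul0r addr0.
  by move: Ht; rewrite addable_ntop //; apply/asboolP.
rewrite /addable; case: ifP => _; [ring | done].
Qed.

Lemma Bcons_eq {T : choiceType} (le : T -> T -> Prop) {K : numClosedFieldType} xi (v : vect T K) c :
  F0 le v -> Bcons xi v c = Mop le xi 0 0 0 1 v c.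
Proof.
move=> Hv; rewrite /Mop /Bcons; case Ht: (top_is le xi c).
  move: Ht; case: c => [|x c] //= /andP [-> _]; ring.
have -> : (if addable le xi c then 0 * v c + 0 * v (xi :: c) else 0) = 0.
  by case: ifP => _ //; rewrite !mul0r addr0.
case: c Ht => [|x c] //= Ht; case: eqP => Hx //.
apply: F0_chain Hv _ => Hc; rewrite Hx in Hc; move: Ht; rewrite Hx eqxx.
by rewrite (asboolT Hc).
Qed.

Lemma Calg_form {T : choiceType} (le : T -> T -> Prop) {K : numClosedFieldType} xi
  (X : vect T K -> vect T K) : Calg le xi X -> Form le xi X.
Proof.
rewrite /Calg; elim.
- move=> Y [->|[->|->]].
  + by apply: (form_of_eq (a := 0) (b := 0) (g := 1) (e := 0)) => v _ c; apply: Bplus_eq.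
  + by apply: (form_of_eq (a := 0) (b := 1) (g := 0) (e := 0)) => v _ c; apply: Bminus_eq.
  + by apply: (form_of_eq (a := 0) (b := 0) (g := 0) (e := 1)) => v Hv c; apply: Bcons_eq.
- move=> X1 X2 _ [_ [a [b [g [e H1]]]]] _ [_ [a' [b' [g' [e' H2]]]]].
  apply: (form_of_eq (a := a + a') (b := b + b') (g := g + g') (e := e + e')) => v Hv c.
  by rewrite Mop_addc H1 ?H2.
- move=> p X1 _ [_ [a [b [g [e H1]]]]].
  apply: (form_of_eq (a := p * a) (b := p * b) (g := p * g) (e := p * e)) => v Hv c.
  by rewrite Mop_scalec H1.
- move=> X1 X2 _ [P1 [a [b [g [e H1]]]]] _ [P2 [a' [b' [g' [e' H2]]]]].
  apply: form_of_eq => v Hv c.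
  rewrite H1; last exact: P2.
  have -> : X2 v = Mop le xi a' b' g' e' v by apply: funext => d; apply: H2.
  by rewrite Mop_mul.
- move=> X1 Y _ [P1 [a [b [g [e H1]]]]] PY Hadj.
  exact: form_of_eq (adj_form H1 PY Hadj).
Qed.

Lemma vac_form {T : choiceType} (le : T -> T -> Prop) {K : numClosedFieldType} xi
  (X : vect T K -> vect T K) (a b g e : K) :
  (forall v, F0 le v -> forall c, X v c = Mop le xi a b g e v c) ->
  vac_state X = a.
Proof.
move=> H; rewrite /vac_state inner_Omega H; last first.
  exists [:: [::]] => c; rewrite /Omega; case: (eqVneq c [::]) => [->|_] //=.
  by rewrite eqxx.
rewrite /Mop /= (_ : addable le xi [::] = true); last by apply/asboolP.
by rewrite /Omega eqxx /= mulr1 mulr0 addr0.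
Qed.


Lemma top_is_cons {T : choiceType} (le : T -> T -> Prop) z x d :
  top_is le z (x :: d) = (x == z) && `[< is_chain le (x :: d) >].
Proof. by []. Qed.

Lemma addable_cons {T : choiceType} (le : T -> T -> Prop) z x d :
  addable le z (x :: d) = `[< plt le x z /\ is_chain le (x :: d) >].
Proof. by []. Qed.

Lemma addable_nil {T : choiceType} (le : T -> T -> Prop) z : addable le z [::].
Proof. by apply/asboolP. Qed.

Lemma bm1_point {T : choiceType} (le : T -> T -> Prop) {K : numClosedFieldType} xi rho eta
  (A1 : rho <> xi) (A2 : ~ plt le rho xi) (A3 : rho <> eta) (A4 : ~ plt le rho eta)
  (A5 : forall x, (x = eta \/ plt le x eta) -> (x = xi \/ plt le x xi) -> plt le x rho)
  (a1 b1 g1 e1 a2 b2 g2 e2 a3 b3 g3 e3 : K) (v : vect T K) c :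
  Mop le xi a1 b1 g1 e1 (Mop le rho a2 b2 g2 e2 (Mop le eta a3 b3 g3 e3 v)) c =
  a2 * Mop le xi a1 b1 g1 e1 (Mop le eta a3 b3 g3 e3 v) c.
Proof.
rewrite -Mop_scale; apply: Mop_rel => d Hd.
set w := Mop le eta a3 b3 g3 e3 v.
have F2 : forall d', w (rho :: d') = 0.
  move=> d'; apply: Mop_nonrel; rewrite top_is_cons addable_cons negb_or.
  apply/andP; split; first by apply/negP => /andP [/eqP].
  by apply/negP => /asboolP [].
case: d Hd => [|x d'] Hd.
  by rewrite /Mop /= addable_nil F2 mulr0 addr0.
have Hx : x = xi \/ plt le x xi.
  move: Hd; rewrite top_is_cons addable_cons => /orP [/andP [/eqP -> _]|/asboolP [H _]].
    by left. by right.
rewrite /Mop top_is_cons.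
case: (eqVneq x rho) => [Exr|Nxr] /=.
  by exfalso; case: Hx => [Ex|Hp]; [apply: A1; rewrite -Exr | apply: A2; rewrite -Exr].
case Had: (addable le rho (x :: d')); first by rewrite F2 mulr0 addr0.
rewrite -/(Mop le eta a3 b3 g3 e3 v (x :: d')) -/w.
suff -> : w (x :: d') = 0 by rewrite mulr0.
apply: Mop_nonrel; apply/negP => Hrel.
have Hc : is_chain le (x :: d') by apply: Mop_relevant_chain Hrel.
have He : x = eta \/ plt le x eta.
  move: Hrel; rewrite top_is_cons addable_cons => /orP [/andP [/eqP -> _]|/asboolP [H _]].
    by left. by right.
move: Had; rewrite addable_cons; move/negP; apply; apply/asboolP; split => //.
exact: A5.
Qed.


Lemma right_point {T : choiceType} (le : T -> T -> Prop) {K : numClosedFieldType} xi eta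
  (B1 : eta <> xi) (B2 : ~ plt le eta xi) (a b g e a' b' g' e' : K) c :
  Mop le xi a b g e (Mop le eta a' b' g' e' (Omega K)) c =
  a' * Mop le xi a b g e (Omega K) c.
Proof.
rewrite -Mop_scale; apply: Mop_rel => d Hd.
case: d Hd => [|x d'] Hd.
  rewrite /Mop /= addable_nil /Omega /=; ring.
have Hx : x = xi \/ plt le x xi.
  move: Hd; rewrite top_is_cons addable_cons => /orP [/andP [/eqP -> _]|/asboolP [H _]].
    by left. by right.
rewrite /Omega /= mulr0 /Mop top_is_cons /=.
case: (eqVneq x eta) => [Exr|Nxr] /=.
  by exfalso; case: Hx => [Ex|Hp]; [apply: B1; rewrite -Exr | apply: B2; rewrite -Exr].
by case: ifP => _ //; rewrite !mulr0 addr0.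
Qed.

Lemma left_point {T : choiceType} (le : T -> T -> Prop) {K : numClosedFieldType} x eta
  (B1 : x <> eta) (B2 : ~ plt le x eta) (a b g e : K) (u : vect T K) :
  Mop le eta a b g e u [:: x] = 0.
Proof.
apply: Mop_nonrel; rewrite top_is_cons addable_cons negb_or.
apply/andP; split; first by apply/negP => /andP [/eqP].
by apply/negP => /asboolP [].
Qed.

Lemma Mop_nil {T : choiceType} (le : T -> T -> Prop) {K : numClosedFieldType} xi
  (a b g e : K) (u : vect T K) :
  Mop le xi a b g e u [::] = a * u [::] + b * u [:: xi].
Proof. by rewrite /Mop /= addable_nil. Qed.


Definition Fc {T : choiceType} {K : numClosedFieldType} (a : nat -> (vect T K -> vect T K))
  (s : seq nat) : vect T K -> vect T K :=
  foldr (fun j acc => fun v => a j (acc v)) id s.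

Lemma Omega_F0 {T : choiceType} (le : T -> T -> Prop) {K : numClosedFieldType} :
  F0 le (Omega K).
Proof.
exists [:: [::]] => c; rewrite /Omega; case: (eqVneq c [::]) => [->|_] //=.
by rewrite eqxx.
Qed.

Lemma Fc_F0 {T : choiceType} (le : T -> T -> Prop) {K : numClosedFieldType}
  (a : nat -> (vect T K -> vect T K)) (P : nat -> Prop) s :
  (forall i, P i -> preserves_F0 le (a i)) -> (forall i, i \in s -> P i) ->
  preserves_F0 le (Fc a s).
Proof.
move=> HP; elim: s => [|i s IH] Hs v Hv //=.
apply: (HP i (Hs i (mem_head _ _))); apply: IH => // j Hj.
by apply: Hs; rewrite inE Hj orbT.
Qed.


Lemma plt_asym {T : choiceType} (le : T -> T -> Prop)
  (Ha : forall x y, le x y -> le y x -> x = y) x y : plt le x y -> ~ plt le y x.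
Proof. by move=> [H1 H2] [H3 _]; apply: H2; apply: Ha. Qed.

Lemma plt_trans {T : choiceType} (le : T -> T -> Prop)
  (Ha : forall x y, le x y -> le y x -> x = y)
  (Ht : forall x y z, le x y -> le y z -> le x z) x y z :
  plt le x y -> plt le y z -> plt le x z.
Proof.
move=> [H1 H2] [H3 H4]; split; first exact: Ht H1 H3.
by move=> E; rewrite E in H1; apply: H4; apply: Ha.
Qed.

Lemma bm_generic {T : choiceType} (le : T -> T -> Prop) {K : numClosedFieldType}
  (Hr : forall x, le x x)
  (Ha : forall x y, le x y -> le y x -> x = y)
  (Ht : forall x y z, le x y -> le y z -> le x z) :
  bm_independent le (@Calg T le K).
Proof.
split.
- move=> xi rho eta Hcase a1 a2 a3 H1 H2 H3 v Hv.
  have [P1 [c1 [d1 [f1 [h1 E1]]]]] := Calg_form H1.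
  have [P2 [c2 [d2 [f2 [h2 E2]]]]] := Calg_form H2.
  have [P3 [c3 [d3 [f3 [h3 E3]]]]] := Calg_form H3.
  have E3' : a3 v = Mop le eta c3 d3 f3 h3 v by apply: funext => c; apply: E3.
  have E2' : a2 (a3 v) = Mop le rho c2 d2 f2 h2 (a3 v).
    by apply: funext => c; apply: E2; apply: P3.
  apply: funext => c.
  rewrite E1; last by apply: P2; apply: P3.
  rewrite E1; last by apply: P3.
  rewrite (vac_form E2) E2' E3'.
  have A : rho <> xi /\ ~ plt le rho xi /\ rho <> eta /\ ~ plt le rho eta /\
    (forall x, (x = eta \/ plt le x eta) -> (x = xi \/ plt le x xi) -> plt le x rho).
    case: Hcase => [[Hxr Her]|[[[Hxr1 Hxr2] Her]|[Hxr [Hre1 Hre2]]]].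
    + split; first by move=> E; case: Hxr => _; apply; rewrite E.
      split; first exact: plt_asym Hxr.
      split; first by move=> E; case: Her => _; apply; rewrite E.
      split; first exact: plt_asym Her.
      by move=> x [->|Hx] _ //; apply: plt_trans Hx Her.
    + split; first by move=> E; apply: Hxr1; rewrite E.
      split; first by move=> [H _].
      split; first by move=> E; case: Her => _; apply; rewrite E.
      split; first exact: plt_asym Her.
      by move=> x [->|Hx] _ //; apply: plt_trans Hx Her.
    + split; first by move=> E; case: Hxr => _; apply; rewrite E.
      split; first exact: plt_asym Hxr.
      split; first by move=> E; apply: Hre1; rewrite E.
      split; first by move=> [H _].
      by move=> x _ [->|Hx] //; apply: plt_trans Hx Hxr.
  case: A => A1 [A2 [A3 [A4 A5]]].
  exact: bm1_point.
- move=> n m k xs a Hmk Hkn Hl Hi Hr' HA.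
  have HF : forall j, (1 <= j <= n)%N -> Form le (xs j) (a j).
    by move=> j Hj; apply: Calg_form; apply: HA.
  have Hpres : forall i, (1 <= i <= n)%N -> preserves_F0 le (a i).
    by move=> i Hi'; case: (HF i Hi').
  pose G j := Fc a (iota j (n.+1 - j)).
  have GF0 : forall j, (1 <= j)%N -> F0 le (G j (Omega K)).
    move=> j Hj; apply: (Fc_F0 (P := fun i => (1 <= i <= n)%N) Hpres).
      by move=> i; rewrite mem_iota; lia.
    exact: Omega_F0.
  have Gstep : forall j v, (j <= n)%N -> G j v = a j (G j.+1 v).
    by move=> j v Hj; rewrite /G subSS subSn.
  have Gend : forall v, G n.+1 v = v by move=> v; rewrite /G subnn.
  have Right : forall j, (m <= j <= n)%N -> forall c,
      G j (Omega K) c = (\prod_(j.+1 <= i < n.+1) vac_state (a i)) * a j (Omega K) c.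
    move=> j; move Et: (n - j)%N => t; elim: t j Et => [|t IH] j Et Hj c.
      have -> : j = n by lia.
      by rewrite Gstep // Gend big_geq // mul1r.
    have Hjn : (j < n)%N by lia.
    have [_ [c1 [d1 [f1 [h1 E1]]]]] := HF j ltac:(lia).
    have [_ [c2 [d2 [f2 [h2 E2]]]]] := HF j.+1 ltac:(lia).
    rewrite Gstep; last by lia.
    rewrite E1; last by apply: GF0; lia.
    have -> : G j.+1 (Omega K) =
        (fun d => (\prod_(j.+2 <= i < n.+1) vac_state (a i)) * a j.+1 (Omega K) d).
      by apply: funext => d; apply: IH; lia.
    rewrite Mop_scale.
    have -> : a j.+1 (Omega K) = Mop le (xs j.+1) c2 d2 f2 h2 (Omega K).
      by apply: funext => d; apply: E2; exact: Omega_F0.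
    have B : xs j.+1 <> xs j /\ ~ plt le (xs j.+1) (xs j).
      case: (ltnP j k) => Hjk.
        have [I1 I2] := Hi j ltac:(lia).
        split; first by move=> E; apply: I1; rewrite E.
        by move=> [H _].
      have Hp := Hr' j ltac:(lia).
      split; first by move=> E; case: Hp => _; apply; rewrite E.
      exact: plt_asym Hp.
    case: B => B1 B2.
    rewrite right_point // E1; last exact: Omega_F0.
    rewrite (big_ltn (m := j.+1)) // (vac_form E2); ring.
  have Left : forall j, (1 <= j <= m)%N ->
      G j (Omega K) [::] = (\prod_(j <= i < m) vac_state (a i)) * G m (Omega K) [::].
    move=> j; move Et: (m - j)%N => t; elim: t j Et => [|t IH] j Et Hj.
      have -> : j = m by lia.
      by rewrite big_geq // mul1r.
    have Hjm : (j < m)%N by lia.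
    have [_ [c1 [d1 [f1 [h1 E1]]]]] := HF j ltac:(lia).
    have [_ [c2 [d2 [f2 [h2 E2]]]]] := HF j.+1 ltac:(lia).
    rewrite Gstep; last by lia.
    rewrite E1; last by apply: GF0; lia.
    rewrite Mop_nil.
    have -> : G j.+1 (Omega K) [:: xs j] = 0.
      rewrite Gstep; last by lia.
      rewrite E2; last by apply: GF0; lia.
      have Hp := Hl j ltac:(lia).
      apply: left_point; first by move=> E; case: Hp => _; apply; rewrite E.
      exact: plt_asym Hp.
    rewrite IH; last by lia. all: try lia.
    rewrite (big_ltn (m := j)) // (vac_form E1); ring.
  have HG1 : G 1%N = Fc a (iota 1 n) by rewrite /G subSS subn0.
  change (vac_state (Fc a (iota 1 n)) = \prod_(1 <= j < n.+1) vac_state (a j)).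
  rewrite -HG1.
  rewrite (big_cat_nat (n := m) (p := n.+1)) /=; [|lia|lia].
  rewrite (big_ltn (m := m) (n := n.+1)); last by lia.
  rewrite {1}/vac_state inner_Omega Left; last by lia.
  rewrite Right; last by lia.
  rewrite -[a m (Omega K) [::]]inner_Omega -/(vac_state (a m)).
  ring.
Qed.


Lemma lagrange (R : realType) (d : nat) (a b : 'I_d -> R) :
  \sum_(i < d) \sum_(j < d) (a i * b j - a j * b i) ^+ 2 =
  2 * ((\sum_(i < d) a i ^+ 2) * (\sum_(i < d) b i ^+ 2) - (\sum_(i < d) a i * b i) ^+ 2).
Proof.
have E1 : (\sum_(i < d) a i ^+ 2) * (\sum_(i < d) b i ^+ 2) =
          \sum_(i < d) \sum_(j < d) a i ^+ 2 * b j ^+ 2.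
  by rewrite mulr_suml; apply: eq_bigr => i _; rewrite mulr_sumr.
have E2 : (\sum_(i < d) a i ^+ 2) * (\sum_(i < d) b i ^+ 2) =
          \sum_(i < d) \sum_(j < d) a j ^+ 2 * b i ^+ 2.
  by rewrite mulrC mulr_suml; apply: eq_bigr => i _; rewrite mulr_sumr; apply: eq_bigr => j _; rewrite mulrC.
have E3 : (\sum_(i < d) a i * b i) ^+ 2 =
          \sum_(i < d) \sum_(j < d) (a i * b i) * (a j * b j).
  by rewrite expr2 mulr_suml; apply: eq_bigr => i _; rewrite mulr_sumr.
have -> : 2 * ((\sum_(i < d) a i ^+ 2) * (\sum_(i < d) b i ^+ 2) - (\sum_(i < d) a i * b i) ^+ 2)
   = (\sum_(i < d) a i ^+ 2) * (\sum_(i < d) b i ^+ 2) + (\sum_(i < d) a i ^+ 2) * (\sum_(i < d) b i ^+ 2)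
     - 2 * (\sum_(i < d) a i * b i) ^+ 2 by ring.
rewrite {1}E1 E2 E3 -big_split /= mulr_sumr -sumrB.
apply: eq_bigr => i _; rewrite mulr_sumr -big_split -sumrB /=.
apply: eq_bigr => j _; ring.
Qed.

Lemma cauchy_schwarz (R : realType) (d : nat) (a b : 'I_d -> R) :
  (\sum_(i < d) a i * b i) ^+ 2 <= (\sum_(i < d) a i ^+ 2) * (\sum_(i < d) b i ^+ 2).
Proof.
have H : 0 <= \sum_(i < d) \sum_(j < d) (a i * b j - a j * b i) ^+ 2.
  by apply: sumr_ge0 => i _; apply: sumr_ge0 => j _; apply: sqr_ge0.
rewrite lagrange in H; rewrite -subr_ge0; move: H; rewrite pmulr_rge0 //.
Qed.

Lemma minkowski (R : realType) (d : nat) (a b : 'I_d -> R) :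
  Num.sqrt (\sum_(i < d) (a i + b i) ^+ 2) <=
  Num.sqrt (\sum_(i < d) a i ^+ 2) + Num.sqrt (\sum_(i < d) b i ^+ 2).
Proof.
set A := \sum_(i < d) a i ^+ 2; set B := \sum_(i < d) b i ^+ 2.
set C := \sum_(i < d) a i * b i.
have A0 : 0 <= A by apply: sumr_ge0 => i _; apply: sqr_ge0.
have B0 : 0 <= B by apply: sumr_ge0 => i _; apply: sqr_ge0.
have CS : C <= Num.sqrt A * Num.sqrt B.
  case: (lerP C 0) => HC.
    by apply: le_trans HC _; apply: mulr_ge0; apply: sqrtr_ge0.
  rewrite -sqrtrM // -(ger0_norm (ltW HC)) -sqrtr_sqr.
  by apply: ler_wsqrtr; apply: cauchy_schwarz.
have ES : \sum_(i < d) (a i + b i) ^+ 2 = A + B + 2 * C.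
  rewrite /A /B /C mulr_sumr -!big_split /=; apply: eq_bigr => i _; ring.
set s := Num.sqrt A + Num.sqrt B.
have s0 : 0 <= s by apply: addr_ge0; apply: sqrtr_ge0.
rewrite -[s](ger0_norm s0) -sqrtr_sqr; apply: ler_wsqrtr.
rewrite ES /s sqrrD !sqr_sqrtr //.
have := CS; lra.
Qed.

Lemma leA_refl d (x : IdxA d) : leA x x.
Proof. by move=> i. Qed.
Lemma leA_anti d (x y : IdxA d) : leA x y -> leA y x -> x = y.
Proof. by move=> H1 H2; apply/ffunP => i; apply/eqP; rewrite eqn_leq H1 H2. Qed.
Lemma leA_trans d (x y z : IdxA d) : leA x y -> leA y z -> leA x z.
Proof. by move=> H1 H2 i; apply: leq_trans (H1 i) (H2 i). Qed.

Lemma leB_refl (R : realType) d (x : IdxB d) : leB R x x.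
Proof.
rewrite /leB subrr (eq_bigr (fun _ => 0)); last by move=> i _; rewrite subrr /= expr0n.
by rewrite big1 // sqrtr0.
Qed.

Lemma leB_trans (R : realType) d (x y z : IdxB d) : leB R x y -> leB R y z -> leB R x z.
Proof.
rewrite /leB => H1 H2.
set a := fun i : 'I_d => ((z.2 i - y.2 i)%:~R : R).
set b := fun i : 'I_d => ((y.2 i - x.2 i)%:~R : R).
have -> : \sum_(i < d) ((z.2 i - x.2 i)%:~R : R) ^+ 2 = \sum_(i < d) (a i + b i) ^+ 2.
  apply: eq_bigr => i _; rewrite /a /b -intrD; congr (_ ^+ 2); congr (_%:~R); ring.
apply: le_trans (minkowski a b) _.
have := H1; have := H2; rewrite /a /b; lra.
Qed.

Lemma leB_anti (R : realType) d (x y : IdxB d) : leB R x y -> leB R y x -> x = y.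
Proof.
rewrite /leB => H1 H2.
have S0 := sqrtr_ge0 (\sum_(i < d) ((y.2 i - x.2 i)%:~R : R) ^+ 2).
have S0' := sqrtr_ge0 (\sum_(i < d) ((x.2 i - y.2 i)%:~R : R) ^+ 2).
have E1 : (x.1%:R : R) = y.1%:R by lra.
have E1' : x.1 = y.1 by apply/eqP; rewrite -(eqr_nat R) E1.
have Hs : Num.sqrt (\sum_(i < d) ((y.2 i - x.2 i)%:~R : R) ^+ 2) = 0.
  by apply/eqP; rewrite eq_le S0 andbT; move: H1; rewrite E1 subrr.
move/eqP: Hs; rewrite sqrtr_eq0 => Hle.
have Hsum : \sum_(i < d) ((y.2 i - x.2 i)%:~R : R) ^+ 2 = 0.
  apply/eqP; rewrite eq_le Hle /=; apply: sumr_ge0 => i _; apply: sqr_ge0.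
have E2 : x.2 = y.2.
  apply/ffunP => i; apply/eqP; rewrite -subr_eq0 -oppr_eq0 opprB -(intr_eq0 R).
  rewrite -sqrf_eq0; apply/eqP.
  move/eqP: Hsum; rewrite psumr_eq0; last by move=> j _; apply: sqr_ge0.
  by move/allP => /(_ i (mem_index_enum _)) /implyP /(_ isT) /eqP.
by case: x y E1' E2 {H1 H2 S0 S0' E1 Hle Hsum} => [? ?] [? ?] /= -> ->.
Qed.

Definition Qf (R : realType) d (M : 'M[R]_d) (v : 'cV[R]_d) : R := (v^T *m M *m v) 0 0.

Lemma QfD (R : realType) d (M N : 'M[R]_d) v : Qf (M + N) v = Qf M v + Qf N v.
Proof. by rewrite /Qf mulmxDr mulmxDl mxE. Qed.

Lemma QfN (R : realType) d (M : 'M[R]_d) v : Qf (- M) v = - Qf M v.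
Proof. by rewrite /Qf mulmxN mulNmx mxE. Qed.

Lemma trD (R : realType) m n (M N : 'M[R]_(m, n)) : (M + N)^T = M^T + N^T.
Proof. by apply/matrixP => i j; rewrite !mxE. Qed.

Lemma mxaddE (R : realType) m n (A B : 'M[R]_(m, n)) i j : (A + B) i j = A i j + B i j.
Proof. by rewrite mxE. Qed.

Lemma map_intrB (R : realType) d (A B : 'M[int]_d) :
  map_mx (intr : int -> R) (A - B) = map_mx intr A - map_mx intr B.
Proof. by apply/matrixP => i j; rewrite !mxE rmorphB. Qed.

Lemma leC_refl (R : realType) d (x : IdxC R d) : leC x x.
Proof.
rewrite /leC subrr (_ : map_mx _ 0 = 0); last by apply/matrixP => i j; rewrite !mxE.
split; first by apply/matrixP => i j; rewrite !mxE.
by move=> v; rewrite mulmx0 mul0mx mxE.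
Qed.

Lemma leC_trans (R : realType) d (x y z : IdxC R d) : leC x y -> leC y z -> leC x z.
Proof.
rewrite /leC => [[S1 P1] [S2 P2]].
have -> : map_mx (intr : int -> R) (val z - val x) =
          map_mx intr (val z - val y) + map_mx intr (val y - val x).
  by rewrite !map_intrB addrA subrK.
split; first by rewrite trD S1 S2.
by move=> v; have := P1 v; have := P2 v; rewrite -!/(Qf _ v) QfD; lra.
Qed.

Lemma leC_anti (R : realType) d (x y : IdxC R d) : leC x y -> leC y x -> x = y.
Proof.
rewrite /leC => [[S1 P1] [S2 P2]].
set M := map_mx (intr : int -> R) (val y - val x).
have EN : map_mx (intr : int -> R) (val x - val y) = - M.
  by rewrite /M !map_intrB opprB.
have Q0 : forall v, Qf M v = 0.
  move=> v; have := P1 v; have := P2 v; rewrite EN -!/(Qf _ v) QfN; lra.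
have Bsym : forall u w : 'cV[R]_d, (u^T *m M *m w) 0 0 = (w^T *m M *m u) 0 0.
  move=> u w; have -> : (u^T *m M *m w) 0 0 = ((u^T *m M *m w)^T) 0 0 by rewrite [RHS]mxE.
  by rewrite !trmx_mul trmxK S1 mulmxA.
have B0 : forall u w : 'cV[R]_d, (u^T *m M *m w) 0 0 = 0.
  move=> u w; have := Q0 (u + w); rewrite /Qf trD mulmxDl !mulmxDr !mulmxDl !mxaddE.
  have := Q0 u; have := Q0 w; rewrite /Qf Bsym; lra.
have M0 : forall i j, M i j = 0.
  move=> i j; rewrite -(B0 (delta_mx i 0) (delta_mx j 0)) trmx_delta -rowE -colE.
  by rewrite !mxE.
apply: val_inj; apply/matrixP => i j.
have := M0 i j; rewrite /M !mxE => /eqP; rewrite intr_eq0 subr_eq0 => /eqP ->.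
by [].
Qed.


Theorem corollary3p4 (R : realType) (d : nat) (cc : cone_case) :
  bm_independent (@idx_le R d cc)
    (@Calg (Idx R d cc) (@idx_le R d cc) (R[i])%type).
Proof.
case: cc => /=; apply: bm_generic.
- exact: leA_refl.
- exact: leA_anti.
- exact: leA_trans.
- exact: leB_refl.
- exact: leB_anti.
- exact: leB_trans.
- exact: leC_refl.
- exact: leC_anti.
- exact: leC_trans.
Qed.
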